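(* (Higher-dimensional analogue of Theorem 1 for knots in $S^{4n+1}$.) The set of functions $\{\sigma_\omega\}_{\omega\in S}$ is linearly independent as a set of real-valued functions on the set of all $(4n+1)$-Seifert matrices: if $\omega_1,\dots,\omega_N\in S$ are distinct and $\sum_i c_i\sigma_{\omega_i}(V)=0$ for all such $V$, with $c_i\in\mathbb{R}$, then all $c_i=0$.
   Context: A $(4n+1)$-Seifert matrix (Seifert matrix of a knot in $S^{4n+1}$) is a $2g\times2g$ integral matrix $V$ with $\det(V+V^T)=\pm1$. For a unit complex number $\omega$, its signature is $\sigma_\omega(V)=\mathrm{sign}\big[(\omega-\bar\omega)\big((1-\omega)V-(1-\bar\omega)V^T\big)\big]$, and its Alexander polynomial is $\Delta_V(t)=\det(tV+V^T)$. $S$ is the set of unit complex numbers with positive imaginary part. *)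

(* Defs.v *)
From mathcomp Require Import all_boot all_algebra reals complex.
Set Implicit Arguments.
Unset Strict Implicit.
Unset Printing Implicit Defensive.
Import GRing.Theory Num.Theory.
Local Open Scope ring_scope.
Local Open Scope complex_scope.

Definition eigenvalues (R : realType) (n : nat) (H : 'M[R[i]]_n) : seq R[i] :=
  sval (closed_field_poly_normal (char_poly H)).

(* Signature ("sign") of a (Hermitian) complex matrix: number of positive
   eigenvalues minus number of negative eigenvalues, counted with multiplicity.
   (In the order of R[i], 0 < z means z is real and positive.) *)
Definition mx_signature (R : realType) (n : nat) (H : 'M[R[i]]_n) : int :=
  (count (fun z => 0 < z) (eigenvalues H))%:Z
  - (count (fun z => z < 0) (eigenvalues H))%:Z.

Definition seifert_matrix (g : nat) (V : 'M[int]_(g.*2)) : Prop :=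
  \det (V + V^T) = 1 \/ \det (V + V^T) = -1.

Definition in_S (R : realType) (w : R[i]) : Prop :=
  `|w| = 1 /\ 0 < 'Im w.

Definition seifert_signature (R : realType) (w : R[i]) (g : nat)
    (V : 'M[int]_(g.*2)) : int :=
  let VC := map_mx (fun z : int => z%:~R : R[i]) V in
  mx_signature ((w - w^*) *: ((1 - w) *: VC - (1 - w^*) *: VC^T)).

(* Main.v *)
Require Import Defs.
From mathcomp Require Import all_boot all_order all_algebra reals complex ring lra.
Import Order.TTheory.
Import GRing.Theory Num.Theory.
Local Open Scope ring_scope.

Local Close Scope ring_scope.
Definition vf (t M : int) (i j : nat) : int :=
  match i, j with
  | 0, 1 => 1%R | 0, 2 => 1%R | 0, 3 => 1%R
  | 1, 0 => (-1)%R | 1, 2 => (M - t)%R | 1, 3 => 1%R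
  | 2, 1 => (t - M)%R | 2, 3 => t
  | 3, 0 => (-1)%R | 3, 2 => (- t)%R
  | _, _ => 0%R end.
Local Open Scope ring_scope.

Lemma detVf (Rg : comRingType) (t M : int) (b1 b2 : Rg) :
  16%:R * \det (\matrix_(i < 4, j < 4) (b1 * (vf t M i j)%:~R + b2 * (vf t M j i)%:~R)) =
  (b1 + b2) ^+ 4 - (2 + 8 * M - 16 * t)%:~R * (b1 + b2) ^+ 2 * (b1 - b2) ^+ 2
  + ((4 * M - 1) ^+ 2)%:~R * (b1 - b2) ^+ 4.
Proof.
rewrite (expand_det_row _ ord0) !big_ord_recl big_ord0 /cofactor.
rewrite !(expand_det_row _ ord0) !big_ord_recl !big_ord0 /cofactor.
rewrite !(expand_det_row _ ord0) !big_ord_recl !big_ord0 /cofactor.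
rewrite !det_mx11 !mxE /bump /=.
rewrite !rmorphB !rmorphD !rmorphM !rmorphN /=.
ring.
Qed.

Lemma herm_root_real (C : numClosedFieldType) n (H : 'M[C]_n) :
  (forall i j, H j i = Num.conj (H i j)) ->
  forall z, root (char_poly H) z -> z \is Num.real.
Proof.
move=> Hh z; rewrite -eigenvalue_root_char => /eigenvalueP [v Hv vnz].
pose a := \sum_i \sum_j v 0 i * H i j * (v 0 j)^*.
pose n2 := \sum_j v 0 j * (v 0 j)^*.
have Ha : a = z * n2.
  rewrite /a exchange_big /n2 mulr_sumr; apply: eq_bigr => j _.
  have := congr1 (fun m : 'rV_n => m 0 j) Hv; rewrite !mxE => e.
  by rewrite -mulr_suml e mulrA.
have aR : a^* = a.
  rewrite /a rmorph_sum /= exchange_big; apply: eq_bigr => i _.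
  rewrite rmorph_sum; apply: eq_bigr => j _.
  by rewrite !rmorphM /= conjCK -Hh; ring.
have n2pos : 0 < n2.
  have [k vk] : exists k, v 0 k != 0.
    apply/existsP; apply: contraR vnz => /existsPn H0.
    by apply/eqP/rowP => j; rewrite mxE; apply/eqP; have := H0 j; rewrite negbK.
  rewrite /n2 (bigD1 k) //= ltr_wpDr //.
    by apply: sumr_ge0 => l _; rewrite -normCK exprn_ge0.
  by rewrite -normCK exprn_gt0 // normr_gt0.
have zE : z = a / n2 by rewrite Ha mulfK // lt0r_neq0.
rewrite CrealE zE rmorph_div ?unitfE ?lt0r_neq0 //= aR.
by rewrite conj_Creal // gtr0_real.
Qed.
Lemma sign4 (R : realDomainType) (a b c d : R) :
  a + b + c + d = 0 -> a * b * c * d != 0 ->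
  (count (fun x => 0 < x) [:: a; b; c; d] == count (fun x => x < 0) [:: a; b; c; d])
   = (0 < a * b * c * d).
Proof.
move=> hs hp.
have ha : a != 0 by apply: contraNneq hp => ->; rewrite !mul0r.
have hb : b != 0 by apply: contraNneq hp => ->; rewrite mulr0 !mul0r.
have hc : c != 0 by apply: contraNneq hp => ->; rewrite mulr0 !mul0r.
have hd : d != 0 by apply: contraNneq hp => ->; rewrite mulr0.
rewrite -sgr_gt0 !sgrM.
case: (ltrgt0P a) ha => // ha _; case: (ltrgt0P b) hb => // hb _;
case: (ltrgt0P c) hc => // hc _; case: (ltrgt0P d) hd => // hd _;
rewrite ?(gtr0_sg ha) ?(ltr0_sg ha) ?(gtr0_sg hb) ?(ltr0_sg hb)
  ?(gtr0_sg hc) ?(ltr0_sg hc) ?(gtr0_sg hd) ?(ltr0_sg hd) /= ?ha ?hb ?hc ?hd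
  ?(lt_gtF ha) ?(lt_gtF hb) ?(lt_gtF hc) ?(lt_gtF hd) /=
  ?mul1r ?mulN1r ?mulrN1 ?mulrNN ?mulr1 ?opprK ?ltr01 ?oppr_gt0 ?ltr10 /=;
first [done | exfalso; lra].
Qed.


Local Open Scope complex_scope.

Section Eig.
Variable R : realType.
Lemma eigE {n} (H : 'M[R[i]]_n) :
  char_poly H = \prod_(z <- eigenvalues H) ('X - z%:P).
Proof.
rewrite /eigenvalues; case: closed_field_poly_normal => s /= ->.
by rewrite (monicP (char_poly_monic H)) scale1r.
Qed.
Lemma eig_size {n} (H : 'M[R[i]]_n) : size (eigenvalues H) = n.
Proof.
have := size_char_poly H; rewrite eigE size_prod_XsubC; by case.
Qed.
Lemma eig_sum {n} (H : 'M[R[i]]_n) : (0 < n)%N -> \sum_(z <- eigenvalues H) z = \tr H.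
Proof.
move=> n0; have := @char_poly_trace _ n H n0.
rewrite eigE; have := @coefPn_prod_XsubC _ (eigenvalues H).
rewrite eig_size -lt0n => /(_ n0) -> /eqP.
by rewrite eqr_opp => /eqP.
Qed.
Lemma eig_prod {n} (H : 'M[R[i]]_n) : \prod_(z <- eigenvalues H) z = \det H.
Proof.
have := char_poly_det H; rewrite eigE coef0_prod_XsubC eig_size => /eqP.
rewrite (inj_eq (mulrI _)) ?unitrX ?unitrN1 //.
by move/eqP.
Qed.
Lemma sig4 (H : 'M[R[i]]_4) (r : R) :
  (forall i j, H j i = Num.conj (H i j)) -> \tr H = 0 -> \det H = r%:C -> r != 0 ->
  (mx_signature H == 0) = (0 < r).
Proof.
move=> Hh Htr Hdet r0.
have hreal : forall z, z \in eigenvalues H -> z \is Num.real.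
  move=> z zin; apply: (@herm_root_real _ _ H Hh z); by rewrite eigE root_prod_XsubC.
have hsz := eig_size H; have hsum := eig_sum H isT; have hprod := eig_prod H.
rewrite /mx_signature; set A := (count _ _); set B := (count _ _).
have -> : (A%:Z - B%:Z == 0) = (A == B) by rewrite subr_eq0 eqz_nat.
rewrite {}/A {}/B.
move: hreal hsz hsum hprod; case: (eigenvalues H) => [|z1 [|z2 [|z3 [|z4 [|]]]]] //.
move=> hreal _ hsum hprod.
have e1 := RRe_real (hreal z1 (mem_head _ _)).
have e2 : (complex.Re z2)%:C = z2 by apply: RRe_real; apply: hreal; rewrite !inE eqxx ?orbT.
have e3 : (complex.Re z3)%:C = z3 by apply: RRe_real; apply: hreal; rewrite !inE eqxx ?orbT.
have e4 : (complex.Re z4)%:C = z4 by apply: RRe_real; apply: hreal; rewrite !inE eqxx ?orbT.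
move: hsum hprod; rewrite -e1 -e2 -e3 -e4 !big_cons !big_nil Htr Hdet.
set a := complex.Re z1; set b := complex.Re z2; set c := complex.Re z3; set d := complex.Re z4.
rewrite addr0 mulr1 -!rmorphD -!rmorphM => /complexI hs /complexI hp.
have c0 : forall x : R, (0 < x%:C) = (0 < x) by move=> x; rewrite ltcE /= eqxx.
have c1 : forall x : R, (x%:C < 0) = (x < 0) by move=> x; rewrite ltcE /= eqxx.
rewrite /= !c0 !c1.
have := @sign4 R a b c d.
rewrite /= addrA addrA in hs. rewrite mulrA mulrA in hp.
rewrite hp; apply => //; rewrite -hs; ring.
Qed.
End Eig.

Definition Vm (t M : int) : 'M[int]_(2.*2) := \matrix_(i, j) vf t M i j.

Definition rr {R : realType} (x y : R) (t M : int) : R :=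
  16%:R * y ^+ 4 * (y ^+ 4 + (2 + 8 * M - 16 * t)%:~R * y ^+ 2 * (1 - x) ^+ 2
     + ((4 * M - 1) ^+ 2)%:~R * (1 - x) ^+ 4).

Lemma detH (R : realType) (x y : R) (t M : int) :
  let w := x +i* y in
  let VC := map_mx (fun z : int => z%:~R : R[i]) (Vm t M) in
  \det ((w - Num.conj w) *: ((1 - w) *: VC - (1 - Num.conj w) *: VC^T)) = (rr x y t M)%:C.
Proof.
move=> w VC.
set b1 := (w - Num.conj w) * (1 - w).
set b2 := - ((w - Num.conj w) * (1 - Num.conj w)).
have -> : (w - Num.conj w) *: ((1 - w) *: VC - (1 - Num.conj w) *: VC^T) =
   \matrix_(i < 4, j < 4) (b1 * (vf t M i j)%:~R + b2 * (vf t M j i)%:~R).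
  by apply/matrixP => i j; rewrite !mxE /b1 /b2; ring.
have := detVf _ t M b1 b2.
have -> : b1 + b2 = (4%:R * y ^+ 2)%:C.
  by apply/eqP; rewrite eq_complex /=; apply/andP; split; apply/eqP; ring.
have -> : b1 - b2 = 'i * (4%:R * y * (1 - x))%:C.
  by apply/eqP; rewrite eq_complex /=; apply/andP; split; apply/eqP; ring.
set P := (_ * y ^+ 2)%:C; set Q := (_ * y * (1 - x))%:C.
have hQ2 : ('i * Q) ^+ 2 = - Q ^+ 2 by rewrite exprMn sqr_i mulN1r.
rewrite -[4%N]/(2 * 2)%N !exprM hQ2 => h.
apply: (mulfI (x := 16%:R)); first by rewrite pnatr_eq0.
rewrite h /rr /P /Q.
ring.
Qed.

Lemma vf_diag (t M : int) (i : 'I_4) : vf t M i i = 0.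
Proof. by case: i => [[|[|[|[|?]]]] ?]. Qed.

Lemma herm_gen (C : numClosedFieldType) n (V : 'M[int]_n) (w : C) :
  let VC := map_mx (fun z : int => z%:~R : C) V in
  let H := (w - Num.conj w) *: ((1 - w) *: VC - (1 - Num.conj w) *: VC^T) in
  forall i j, H j i = Num.conj (H i j).
Proof.
move=> VC H i j; rewrite /H /VC !mxE (rmorphM Num.conj) !(rmorphB Num.conj) !(rmorphM Num.conj) !(rmorphB Num.conj) /= conjCK rmorph1 !rmorph_int.
ring.
Qed.

Lemma sigV (R : realType) (w : R[i]) (t M : int) :
  rr (complex.Re w) (complex.Im w) t M != 0 ->
  (seifert_signature w (Vm t M) == 0) = (0 < rr (complex.Re w) (complex.Im w) t M).
Proof.
case: w => x y /= hr.
rewrite /seifert_signature.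
apply: sig4 => //.
- exact: herm_gen.
- rewrite /mxtrace (eq_bigr (fun _ => 0)) ?big1 // => i _.
  by rewrite !mxE vf_diag mulr0z; ring.
- exact: detH.
Qed.

Definition Qf {R : realType} (t M : int) (u : R) : R :=
  1 + (2 + 8 * M%:~R - 16 * t%:~R) * u + (4 * M%:~R - 1) ^+ 2 * u ^+ 2.

Lemma choose_tM (R : realType) (T d : R) : 0 < T -> 0 < d ->
  exists t M : int, Qf t M T < 0 /\ forall u, T + d <= u -> 0 < Qf t M u.
Proof.
move=> T0 d0.
set K := (T^-1 + 16) / d.
have K0 : 0 < K by rewrite /K divr_gt0 // addr_gt0 ?invr_gt0.
set M : int := Num.floor K + 1.
have hM : K < M%:~R by rewrite /M floorD1_gt.
have hM' : (Num.floor K)%:~R <= K by apply: floor_le.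
have M1 : 1 <= M%:~R :> R.
  rewrite /M rmorphD /= ler_wpDl //.
  by rewrite ler0z real_floor_ge0 ?num_real // ltW.
set m : R := 4 * M%:~R - 1.
have hm : K < m ^+ 2 by rewrite /m; nra.
have hmd : T^-1 + 16 < m ^+ 2 * d.
  by rewrite -ltr_pdivrMr // -/K.
set D := T + d.
set X := (m ^+ 2 * D + 8 * M%:~R + 2) / 16.
exists (Num.floor X), M.
have h1 := floor_le X; have h2 := floorD1_gt X; rewrite rmorphD /= in h2.
set tt := (Num.floor X)%:~R in h1 h2 *.
have e1 : 16 * tt - 8 * M%:~R - 2 <= m ^+ 2 * D.
  by move: h1; rewrite /X ler_pdivlMr //; lra.
have e2 : m ^+ 2 * D - 16 < 16 * tt - 8 * M%:~R - 2.
  by move: h2; rewrite /X ltr_pdivrMr //; lra.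
have iT : T * T^-1 = 1 by rewrite mulfV // lt0r_neq0.
split.
  rewrite /Qf -/m -/tt.
  have : T * (m ^+ 2 * T - (16 * tt - 8 * M%:~R - 2)) < -1.
    have : m ^+ 2 * T - (16 * tt - 8 * M%:~R - 2) < - T^-1.
      rewrite /D in e2; nra.
    move=> h; nra.
  nra.
move=> u hu; rewrite /Qf -/m -/tt.
have u0 : 0 < u by move: hu; rewrite /D; lra.
have : 0 <= m ^+ 2 * u - (16 * tt - 8 * M%:~R - 2).
  have : m ^+ 2 * D <= m ^+ 2 * u by rewrite ler_wpM2l // sqr_ge0.
  lra.
nra.
Qed.

Lemma rrQ (R : realType) (x y : R) (t M : int) : y != 0 ->
  rr x y t M = 16 * y ^+ 8 * Qf t M ((1 - x) ^+ 2 / y ^+ 2).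
Proof. by move=> y0; rewrite /rr /Qf; field. Qed.

Lemma seif (t M : int) : seifert_matrix (Vm t M).
Proof.
left.
have -> : Vm t M + (Vm t M)^T =
   \matrix_(i < 4, j < 4) (1 * (vf t M i j)%:~R + 1 * (vf t M j i)%:~R).
  by apply/matrixP => i j; rewrite !mxE !intz !mul1r.
have h := detVf _ t M (1 : int) 1.
apply: (mulfI (x := 16 : int)) => //.
rewrite h; ring.
Qed.

Lemma delta_seq (R : realDomainType) (a : R) (s : seq R) :
  exists2 d, 0 < d & forall b, b \in s -> a < b -> a + d <= b.
Proof.
elim: s => [|b s [d d0 hd]]; first by exists 1.
case: (ltP a b) => hab.
  exists (Num.min d (b - a)); first by rewrite lt_min d0 subr_gt0.
  move=> b'; rewrite inE => /orP [/eqP -> _|bs ab'].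
    by rewrite -lerBrDl ge_min lexx orbT.
  have := hd b' bs ab'; rewrite -!lerBrDl => h.
  by rewrite ge_min h.
exists d => // b'; rewrite inE => /orP [/eqP -> ab'|]; last exact: hd.
by move: hab; rewrite leNgt ab'.
Qed.

Theorem mainTheorem9 (R : realType) (N : nat) (w : 'I_N -> R[i]) (c : 'I_N -> R) :
  injective w ->
  (forall i, in_S (w i)) ->
  (forall (g : nat) (V : 'M[int]_(g.*2)), seifert_matrix V ->
     \sum_(i < N) c i * (seifert_signature (w i) V)%:~R = 0) ->
  forall i, c i = 0.
Proof.
move=> winj wS hsum.
pose x j := complex.Re (w j); pose y j := complex.Im (w j).
have wE : forall j, w j = x j +i* y j by move=> j; rewrite /x /y; case: (w j).
have y0 : forall j, 0 < y j.
  move=> j; have [_] := wS j; rewrite -complexIm.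
  by rewrite -[0 : R[i]]/((0 : R)%:C) ltcR.
have xy1 : forall j, x j ^+ 2 + y j ^+ 2 = 1.
  move=> j; have [h _] := wS j; move: h; rewrite normc_def => /complexI h.
  have hs : 0 <= x j ^+ 2 + y j ^+ 2 by rewrite addr_ge0 ?sqr_ge0.
  by rewrite -(sqr_sqrtr hs) /x /y h expr1n.
have x1 : forall j, x j < 1.
  move=> j; have := xy1 j; have := y0 j; nra.
pose tau j := (1 - x j) ^+ 2 / y j ^+ 2.
have tau0 : forall j, 0 < tau j.
  move=> j; rewrite /tau divr_gt0 // ?exprn_gt0 ?y0 //; have := x1 j; nra.
have tauinj : forall j k, tau j = tau k -> j = k.
  move=> j k; rewrite /tau => h; apply: winj; rewrite !wE.
  have yj := y0 j; have yk := y0 k; have xj := x1 j; have xk := x1 k.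
  have h2 : (1 - x j) ^+ 2 * y k ^+ 2 = (1 - x k) ^+ 2 * y j ^+ 2.
    by move/eqP: h; rewrite eqr_div ?expf_neq0 ?lt0r_neq0 // => /eqP.
  have hx : x j = x k.
    have e : (1 - x j) * (1 - x k) * (2 * (x k - x j)) = 0.
      have ej : y j ^+ 2 = 1 - x j ^+ 2 by have := xy1 j; lra.
      have ek : y k ^+ 2 = 1 - x k ^+ 2 by have := xy1 k; lra.
      rewrite ej ek in h2.
      have e0 : (1 - x j) ^+ 2 * (1 - x k ^+ 2) - (1 - x k) ^+ 2 * (1 - x j ^+ 2) = 0.
        by rewrite h2 subrr.
      rewrite -e0; ring.
    move/eqP: e; rewrite !mulf_eq0 !subr_eq0 pnatr_eq0 /=.
    case/orP => [/orP [/eqP e|/eqP e]|/eqP e] //; by move: e xj xk; lra.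
  have hy : y j = y k.
    have := xy1 j; have := xy1 k; rewrite hx; nra.
  by rewrite hx hy.
have key : forall i, (forall j, tau j < tau i -> c j = 0) -> c i = 0.
  move=> i hi.
  have [d d0 hd] := @delta_seq R (tau i) [seq tau j | j <- enum 'I_N].
  have [t [M [hQi hQ]]] := @choose_tM R _ _ (tau0 i) d0.
  have := hsum 2%N (Vm t M) (seif t M).
  have rrE : forall j, rr (x j) (y j) t M = 16 * y j ^+ 8 * Qf t M (tau j).
    by move=> j; rewrite rrQ // lt0r_neq0.
  have pos8 : forall j, 0 < 16 * y j ^+ 8 :> R.
    by move=> j; rewrite mulr_gt0 // exprn_gt0.
  rewrite (bigD1 i) //= big1 => [|j ji].
    rewrite addr0 => /eqP; rewrite mulf_eq0 intr_eq0 => /orP [/eqP //|].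
    have rri : rr (x i) (y i) t M < 0 by rewrite rrE pmulr_rlt0.
    rewrite sigV; last exact: ltr0_neq0 rri.
    by rewrite ltNge (ltW rri).
  case: (ltgtP (tau j) (tau i)) => hji.
  - by rewrite hi // mul0r.
  - have hQj : 0 < Qf t M (tau j).
      apply: hQ; apply: hd => //; apply: map_f; by rewrite mem_enum.
    have : seifert_signature (w j) (Vm t M) == 0.
      have rrj : 0 < rr (x j) (y j) t M by rewrite rrE pmulr_rgt0.
      by rewrite sigV ?rrj // lt0r_neq0.
    by move/eqP => ->; rewrite mulr0.
  - by move: ji; rewrite (tauinj _ _ hji) eqxx.
have ind : forall n i, (#|[set j | (tau j < tau i)%R]| <= n)%N -> c i = 0.
  elim=> [|n IH] i hn; apply: key => j hj.
    have : j \in [set j | (tau j < tau i)%R] by rewrite inE.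
    by move: hn; rewrite leqn0 cards_eq0 => /eqP ->; rewrite inE.
  apply: IH; rewrite -ltnS; apply: leq_trans hn.
  apply: proper_card; apply/properP; split.
    apply/subsetP => k; rewrite !inE => hk; exact: lt_trans hk hj.
  by exists j; rewrite !inE ?hj // ltxx.
by move=> i; apply: (ind _ i (leqnn _)).
Qed.
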